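(* For every integer $N\ge 1$, \[ \tilde S(N)-S(N)\le N\tau(N)\quad\text{and}\quad S(N)-\bar S(N)\le N\tau(N). \]
   Context: For $E\subset\mathbb{R}$, $q(E)=\min\{q\in\mathbb{N}^*:\exists p\in\mathbb{Z},\ p/q\in E\}$ (the smallest denominator of a rational number in $E$). Define $S(N)=\sum_{j=1}^N q\big(\,]\tfrac{j-1}N,\tfrac jN]\,\big)$, $\bar S(N)=\sum_{j=1}^N q\big([\tfrac{j-1}N,\tfrac jN]\big)$, $\tilde S(N)=\sum_{j=1}^N q\big(\,]\tfrac{j-1}N,\tfrac jN[\,\big)$. $\tau(N)$ is the number of divisors of $N$. *)

(* Defs.v *)
From HB Require Import structures.
From mathcomp Require Import all_boot all_order all_algebra.
From mathcomp Require Import boolp.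
Set Implicit Arguments. Unset Strict Implicit. Unset Printing Implicit Defensive.
Import Order.TTheory GRing.Theory Num.Theory.

Local Open Scope ring_scope.

Definition has_frac (E : {pred rat}) (q : nat) : Prop :=
  (0 < q)%N /\ exists p : int, (p%:~R / q%:R : rat) \in E.

(* q(E) = min { q in N* : exists p in Z, p/q in E }  (0 if no such q,
   which never happens for the intervals used below). *)
Definition qmin (E : {pred rat}) : nat :=
  match pselect (exists q, `[< has_frac E q >]) with
  | left ex => ex_minn ex
  | right _ => 0%N
  end.

Definition S (N : nat) : nat :=
  (\sum_(1 <= j < N.+1) qmin (mem `]((j.-1)%:R / N%:R : rat), (j%:R / N%:R)]))%N.
Definition Sbar (N : nat) : nat :=
  (\sum_(1 <= j < N.+1) qmin (mem `[((j.-1)%:R / N%:R : rat), (j%:R / N%:R)]))%N.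
Definition Stilde (N : nat) : nat :=
  (\sum_(1 <= j < N.+1) qmin (mem `]((j.-1)%:R / N%:R : rat), (j%:R / N%:R)[))%N.

Definition tau (N : nat) : nat := size (divisors N).

(* Main.v *)
Require Import Defs.
From HB Require Import structures.
From mathcomp Require Import all_boot all_order all_algebra.
From mathcomp Require Import boolp zify.
Import Order.TTheory GRing.Theory Num.Theory.

Lemma qmin_le (E : {pred rat}) q : has_frac E q -> (qmin E <= q)%N.
Proof.
move=> h; rewrite /qmin; case: pselect => [ex|nex].
  case: ex_minnP => m _ /(_ q); apply; exact/asboolP.
by exfalso; apply: nex; exists q; exact/asboolP.
Qed.

Lemma qmin_spec (E : {pred rat}) q : has_frac E q -> has_frac E (qmin E).
Proof.
move=> h; rewrite /qmin; case: pselect => [ex|nex].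
  by case: ex_minnP => m /asboolP.
by exfalso; apply: nex; exists q; exact/asboolP.
Qed.

Lemma sum_gcd N : (0 < N)%N -> (\sum_(1 <= j < N.+1) gcdn j N <= N * tau N)%N.
Proof.
move=> N0.
have h1 j : (gcdn j N <= \sum_(d <- divisors N) d * (d %| j))%N.
  have gin : gcdn j N \in divisors N by rewrite -dvdn_divisors // dvdn_gcdr.
  rewrite (bigD1_seq _ gin (divisors_uniq N)) /= dvdn_gcdl muln1; exact: leq_addr.
apply: leq_trans; first by apply: leq_sum => j _; exact: h1.
rewrite exchange_big /=.
rewrite (eq_big_seq (fun _ => N)) => [|d dN].
  rewrite big_const_seq count_predT /tau iter_addn_0 mulnC //.
rewrite -big_distrr /= -divn_count_dvd mulnC divnK //.
by rewrite dvdn_divisors.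
Qed.
Lemma bez_pos (a d g : nat) : (0 < d)%N -> coprime d a ->
  exists q n, (g < q <= g + d)%N /\ n * d = a * q + 1.
Proof.
move=> d0 cop; case: (@Bezoutl d a d0) => u ud; rewrite (eqP cop) => /dvdnP [k hk].
have [K hK] : exists K, (g < u + d * K <= g + d)%N.
  have eg := divn_eq g d; have lm := ltn_pmod g d0.
  move: eg lm; set G := g %/ d; set r := g %% d => eg lm.
  have hG : d * G = G * d by rewrite mulnC.
  case: (ltnP g (u + d * G)) => h.
    exists G; lia.
  exists G.+1; rewrite mulnS; lia.
exists (u + d * K), (k + a * K); split => //.
nia.
Qed.

Lemma bez_neg (a d g : nat) : (0 < d)%N -> (0 < a)%N -> coprime d a ->
  exists q n, (g < q <= g + d)%N /\ n * d + 1 = a * q.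
Proof.
move=> d0 a0 cop; case: (@Bezoutl d a d0) => u ud; rewrite (eqP cop) => /dvdnP [k hk].
have [K hK] : exists K, (g < (d - u) + d * K <= g + d)%N.
  have eg := divn_eq g d; have lm := ltn_pmod g d0.
  move: eg lm; set G := g %/ d; set r := g %% d => eg lm.
  have hG : d * G = G * d by rewrite mulnC.
  case: (ltnP g ((d - u) + d * G)) => h.
    exists G; lia.
  exists G.+1; rewrite mulnS; lia.
have ka : (k <= a)%N.
  have : (k * d <= a * d)%N by rewrite -hk; nia.
  by rewrite leq_pmul2r.
exists ((d - u) + d * K), (a - k + a * K); split => //.
have e1 : (a - k) * d = a * d - k * d by rewrite mulnBl.
have e2 : a * (d - u) = a * d - a * u by rewrite mulnBr.
have e3 : (k * d <= a * d)%N by rewrite leq_pmul2r.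
rewrite mulnDl e1 mulnDr e2.
nia.
Qed.
Local Open Scope ring_scope.
Lemma memoo (x a b : rat) : (x \in mem `]a, b[) = (a < x < b).
Proof. exact: in_itv. Qed.
Lemma memoc (x a b : rat) : (x \in mem `]a, b]) = (a < x <= b).
Proof. exact: in_itv. Qed.
Lemma memcc (x a b : rat) : (x \in mem `[a, b]) = (a <= x <= b).
Proof. exact: in_itv. Qed.

Lemma ltfrac (a b c e : nat) : (0 < b)%N -> (0 < e)%N ->
  ((a%:R / b%:R : rat) < c%:R / e%:R) = (a * e < c * b)%N.
Proof.
move=> b0 e0.
rewrite ltr_pdivrMr ?ltr0n // mulrAC ltr_pdivlMr ?ltr0n // -!natrM ltr_nat.
by rewrite mulnC [(c * b)%N]mulnC.
Qed.

Lemma lefrac (a b c e : nat) : (0 < b)%N -> (0 < e)%N ->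
  ((a%:R / b%:R : rat) <= c%:R / e%:R) = (a * e <= c * b)%N.
Proof.
move=> b0 e0.
rewrite ler_pdivrMr ?ltr0n // mulrAC ler_pdivlMr ?ltr0n // -!natrM ler_nat.
by rewrite mulnC [(c * b)%N]mulnC.
Qed.

Lemma eqfrac (p : int) (m k N : nat) : (0 < m)%N -> (0 < N)%N ->
  (p%:~R / m%:R : rat) = k%:R / N%:R -> (N %/ gcdn k N <= m)%N.
Proof.
move=> m0 N0 h.
have hz : p * N%:Z = k%:Z * m%:Z.
  apply/eqP; rewrite -(eqr_int rat) !rmorphM /=.
  move/eqP: h; rewrite eqr_div ?pnatr_eq0 -?lt0n //.
have [n pn] : exists n : nat, p = n%:Z.
  clear h; case: p hz => [n|n] hz; first by exists n.
  exfalso; lia.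
have hn : (n * N = k * m)%N by move: hz; rewrite pn; lia.
have g0 : (0 < gcdn k N)%N by rewrite gcdn_gt0 N0 orbT.
have d1 : (N %| gcdn k N * m)%N.
  rewrite muln_gcdl dvdn_gcd; apply/andP; split; last exact: dvdn_mulr.
  by apply/dvdnP; exists n; rewrite -hn mulnC.
apply: dvdn_leq => //.
move: d1; rewrite -{1}(divnK (dvdn_gcdr k N)) [X in (_ %| X)%N]mulnC dvdn_pmul2r //.
Qed.

Lemma cop_quot k N : (0 < N)%N -> coprime (N %/ gcdn k N) (k %/ gcdn k N).
Proof.
move=> N0; have g0 : (0 < gcdn k N)%N by rewrite gcdn_gt0 N0 orbT.
rewrite /coprime; apply/eqP.
apply/eqP; rewrite -(eqn_pmul2r g0) mul1n muln_gcdl !divnK ?dvdn_gcdl ?dvdn_gcdr //.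
by rewrite gcdnC.
Qed.

Lemma exA j N : (0 < N)%N -> (1 <= j <= N)%N ->
  exists q, has_frac (mem `]((j.-1)%:R / N%:R : rat), (j%:R / N%:R)[) q /\
    (q <= gcdn j N + N %/ gcdn j N)%N.
Proof.
move=> N0 /andP[j1 jN].
have g0 : (0 < gcdn j N)%N by rewrite gcdn_gt0 N0 orbT.
set g := gcdn j N in g0 *; set d := (N %/ g)%N; set a := (j %/ g)%N.
have eN : N = (d * g)%N by rewrite divnK // dvdn_gcdr.
have ej : j = (a * g)%N by rewrite divnK // dvdn_gcdl.
have d0 : (0 < d)%N by move: N0; rewrite eN muln_gt0 => /andP[].
have a0 : (0 < a)%N by move: j1; rewrite ej muln_gt0 => /andP[].
have [q [n [/andP[q1 q2] hn]]] := @bez_neg a d g d0 a0 (@cop_quot j N N0).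
have q0 : (0 < q)%N by apply: leq_ltn_trans q1.
have e1 : (n * N + g = j * q)%N.
  rewrite eN ej mulnA -[g in (_ + g)%N]mul1n -mulnDl hn; lia.
exists q; split; last by [].
split => //; exists n%:Z.
rewrite memoo.
have -> : (n%:Z)%:~R = (n%:R : rat) by [].
rewrite ltfrac // ltfrac //.
have e2 : (j.-1 * q + q = j * q)%N by rewrite -mulSnr prednK.
apply/andP; split.
all: lia.
Qed.

Lemma exB j N : (0 < N)%N -> (1 <= j <= N)%N ->
  exists q, has_frac (mem `]((j.-1)%:R / N%:R : rat), (j%:R / N%:R)]) q /\
    (q <= gcdn j.-1 N + N %/ gcdn j.-1 N)%N.
Proof.
move=> N0 /andP[j1 jN].
have g0 : (0 < gcdn j.-1 N)%N by rewrite gcdn_gt0 N0 orbT.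
set k := j.-1 in g0 *.
have jk : j = k.+1 by rewrite /k prednK.
set g := gcdn k N in g0 *; set d := (N %/ g)%N; set a := (k %/ g)%N.
have eN : N = (d * g)%N by rewrite divnK // dvdn_gcdr.
have ej : k = (a * g)%N by rewrite divnK // dvdn_gcdl.
have d0 : (0 < d)%N by move: N0; rewrite eN muln_gt0 => /andP[].
have [q [n [/andP[q1 q2] hn]]] := @bez_pos a d g d0 (@cop_quot k N N0).
have q0 : (0 < q)%N by apply: leq_ltn_trans q1.
have e1 : (n * N = k * q + g)%N.
  rewrite eN ej mulnA hn; lia.
exists q; split; last by [].
split => //; exists n%:Z.
rewrite memoc.
have -> : (n%:Z)%:~R = (n%:R : rat) by [].
rewrite ltfrac // lefrac // jk.
apply/andP; split; lia.
Qed.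

Lemma stepA j N : (0 < N)%N -> (1 <= j <= N)%N ->
  (qmin (mem `]((j.-1)%:R / N%:R : rat), (j%:R / N%:R)[) <=
   qmin (mem `]((j.-1)%:R / N%:R : rat), (j%:R / N%:R)]) + gcdn j N)%N.
Proof.
move=> N0 hj; have /andP[j1 jN] := hj.
have hN : has_frac (mem `]((j.-1)%:R / N%:R : rat), (j%:R / N%:R)]) N.
  split => //; exists j%:Z; rewrite memoc.
  have -> : (j%:Z)%:~R = (j%:R : rat) by [].
  rewrite lexx andbT ltfrac // ltn_pmul2r // prednK //.
have [m0 [p hp]] := @qmin_spec _ _ hN.
move: m0 hp; set m := qmin _ => m0 hp.
move: (hp); rewrite memoc => /andP[lo hi].
have [lt|ge] := boolP (p%:~R / m%:R < (j%:R / N%:R : rat)).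
  apply: leq_trans (leq_addr _ _); apply: (@qmin_le _ _).
  by split => //; exists p; rewrite memoo lo lt.
have eq : p%:~R / m%:R = (j%:R / N%:R : rat).
  by apply/eqP; rewrite eq_le hi /= leNgt.
have := @eqfrac _ _ _ _ m0 N0 eq.
have [q [hq qle]] := @exA _ _ N0 hj.
have := @qmin_le _ _ hq.
lia.
Qed.

Lemma stepB j N : (0 < N)%N -> (1 <= j <= N)%N ->
  (qmin (mem `]((j.-1)%:R / N%:R : rat), (j%:R / N%:R)]) <=
   qmin (mem `[((j.-1)%:R / N%:R : rat), (j%:R / N%:R)]) + gcdn j.-1 N)%N.
Proof.
move=> N0 hj; have /andP[j1 jN] := hj.
have hN : has_frac (mem `[((j.-1)%:R / N%:R : rat), (j%:R / N%:R)]) N.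
  split => //; exists j%:Z; rewrite memcc.
  have -> : (j%:Z)%:~R = (j%:R : rat) by [].
  rewrite lexx andbT lefrac // leq_pmul2r // leq_pred //.
have [m0 [p hp]] := @qmin_spec _ _ hN.
move: m0 hp; set m := qmin _ => m0 hp.
move: (hp); rewrite memcc => /andP[lo hi].
have [lt|ge] := boolP ((j.-1%:R / N%:R : rat) < p%:~R / m%:R).
  apply: leq_trans (leq_addr _ _); apply: (@qmin_le _ _).
  by split => //; exists p; rewrite memoc hi lt.
have eq : p%:~R / m%:R = (j.-1%:R / N%:R : rat).
  by apply/eqP; rewrite eq_le lo andbT leNgt.
have := @eqfrac _ _ _ _ m0 N0 eq.
have [q [hq qle]] := @exB _ _ N0 hj.
have := @qmin_le _ _ hq.
lia.
Qed.

Lemma sum_gcd_pred N : (0 < N)%N ->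
  (\sum_(1 <= j < N.+1) gcdn j.-1 N = \sum_(1 <= j < N.+1) gcdn j N)%N.
Proof.
move=> N0.
by rewrite big_add1 /= big_ltn // big_nat_recr //= gcd0n gcdnn addnC.
Qed.

Theorem proposition7 (N : nat) : (1 <= N)%N ->
  ((Stilde N)%:Z - (S N)%:Z <= (N * tau N)%:Z)%R /\
  ((S N)%:Z - (Sbar N)%:Z <= (N * tau N)%:Z)%R.
Proof.
move=> N0.
have hsum := @sum_gcd _ N0.
have h1 : (Stilde N <= S N + \sum_(1 <= j < N.+1) gcdn j N)%N.
  rewrite /Stilde /S -big_split /=.
  rewrite [X in (X <= _)%N]big_nat_cond [X in (_ <= X)%N]big_nat_cond.
  apply: leq_sum => j /andP[hj _]; apply: stepA => //.

have h2 : (S N <= Sbar N + \sum_(1 <= j < N.+1) gcdn j N)%N.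
  rewrite -sum_gcd_pred // /Sbar /S -big_split /=.
  rewrite [X in (X <= _)%N]big_nat_cond [X in (_ <= X)%N]big_nat_cond.
  apply: leq_sum => j /andP[hj _]; apply: stepB => //.

split; lia.
Qed.
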